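(* Let $X$ and $Y$ be Banach spaces such that the pair $(X,Y)$ fails the uniform sBPBp. Then the pair $(\ell_2(X),\ell_\infty(Y))$ fails the sBPBp.
   Context: Scalars $\mathbb{K}=\mathbb{R}$ or $\mathbb{C}$. $\ell_2(X)$ is the space of sequences $(x_n)$ in $X$ with $\|(x_n)\|=(\sum_n\|x_n\|^2)^{1/2}<\infty$; $\ell_\infty(Y)$ is the space of bounded sequences in $Y$ with the sup norm. $S_X$ is the unit sphere of $X$, $\mathcal{L}(X,Y)$ the bounded linear operators. A pair $(X,Y)$ has the strong Bishop–Phelps–Bollobás property (sBPBp) if for every $\varepsilon>0$ and every $T\in\mathcal{L}(X,Y)$ with $\|T\|=1$ there exists $\eta=\eta(\varepsilon,T)>0$ such that whenever $x_0\in S_X$ satisfies $\|T(x_0)\|>1-\eta$, there exists $x_1\in S_X$ with $\|T(x_1)\|=1$ and $\|x_1-x_0\|<\varepsilon$. The pair has the uniform sBPBp if the same holds with $\eta=\eta(\varepsilon)$ depending only on $\varepsilon$ (independent of $T$). *)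

(* Defs.v *)
From Stdlib Require Import Reals Classical ClassicalEpsilon.
Open Scope R_scope.
Set Implicit Arguments.

Inductive scalars := RealS | ComplexS.

Record Cx := mkCx { Cre : R; Cim : R }.
Definition Cadd (z w : Cx) := mkCx (Cre z + Cre w) (Cim z + Cim w).
Definition Cmul (z w : Cx) :=
  mkCx (Cre z * Cre w - Cim z * Cim w) (Cre z * Cim w + Cim z * Cre w).
Definition Cone := mkCx 1 0.
Definition Cabs (z : Cx) := sqrt (Cre z ^ 2 + Cim z ^ 2).

Definition Kt (s : scalars) : Type :=
  match s with RealS => R | ComplexS => Cx end.
Definition Kadd {s} : Kt s -> Kt s -> Kt s :=
  match s return Kt s -> Kt s -> Kt s with RealS => Rplus | ComplexS => Cadd end.
Definition Kmul {s} : Kt s -> Kt s -> Kt s :=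
  match s return Kt s -> Kt s -> Kt s with RealS => Rmult | ComplexS => Cmul end.
Definition Kone {s} : Kt s :=
  match s return Kt s with RealS => 1 | ComplexS => Cone end.
Definition Kabs {s} : Kt s -> R :=
  match s return Kt s -> R with RealS => Rabs | ComplexS => Cabs end.

Record Banach (s : scalars) := {
  bcar :> Type;
  bzero : bcar;
  badd : bcar -> bcar -> bcar;
  bopp : bcar -> bcar;
  bscal : Kt s -> bcar -> bcar;
  bnorm : bcar -> R;
  b_add_assoc : forall x y z, badd x (badd y z) = badd (badd x y) z;
  b_add_comm : forall x y, badd x y = badd y x;
  b_add_zero : forall x, badd x bzero = x;
  b_add_opp : forall x, badd x (bopp x) = bzero;
  b_scal_one : forall x, bscal Kone x = x;
  b_scal_assoc : forall a b x, bscal a (bscal b x) = bscal (Kmul a b) x;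
  b_scal_distr_l : forall a x y, bscal a (badd x y) = badd (bscal a x) (bscal a y);
  b_scal_distr_r : forall a b x, bscal (Kadd a b) x = badd (bscal a x) (bscal b x);
  b_norm_eq0 : forall x, bnorm x = 0 -> x = bzero;
  b_norm_scal : forall a x, bnorm (bscal a x) = Kabs a * bnorm x;
  b_norm_triangle : forall x y, bnorm (badd x y) <= bnorm x + bnorm y;
  b_complete : forall u : nat -> bcar,
    (forall eps, 0 < eps -> exists N, forall m n, (N <= m)%nat -> (N <= n)%nat ->
        bnorm (badd (u m) (bopp (u n))) < eps) ->
    exists l, forall eps, 0 < eps -> exists N, forall n, (N <= n)%nat ->
        bnorm (badd (u n) (bopp l)) < eps
}.

(** * Supremum of a set of reals (0 if it has no least upper bound) *)
Definition sup_R (E : R -> Prop) : R :=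
  match excluded_middle_informative (exists l, is_lub E l) with
  | left H => proj1_sig (constructive_indefinite_description _ H)
  | right _ => 0
  end.

(** * Normed spaces presented as a subset [ndom] of an ambient type with
    pointwise operations (used to present X, Y, l_2(X), l_oo(Y) uniformly). *)
Record NSpace (s : scalars) := {
  ncar : Type;
  ndom : ncar -> Prop;
  nzero : ncar;
  nadd : ncar -> ncar -> ncar;
  nopp : ncar -> ncar;
  nscal : Kt s -> ncar -> ncar;
  nnorm : ncar -> R
}.

Definition NofB s (X : Banach s) : NSpace s :=
  {| ncar := bcar X; ndom := fun _ => True; nzero := bzero X; nadd := @badd s X;
     nopp := @bopp s X; nscal := @bscal s X; nnorm := @bnorm s X |}.

Definition l2 s (X : Banach s) : NSpace s :=
  {| ncar := nat -> bcar X;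
     ndom := fun x => exists M, forall n,
        sum_f_R0 (fun k => bnorm X (x k) ^ 2) n <= M;
     nzero := fun _ => bzero X;
     nadd := fun x y n => badd X (x n) (y n);
     nopp := fun x n => bopp X (x n);
     nscal := fun a x n => bscal X a (x n);
     nnorm := fun x => sqrt (sup_R (fun r => exists n,
        r = sum_f_R0 (fun k => bnorm X (x k) ^ 2) n)) |}.

Definition linf s (Y : Banach s) : NSpace s :=
  {| ncar := nat -> bcar Y;
     ndom := fun y => exists M, forall n, bnorm Y (y n) <= M;
     nzero := fun _ => bzero Y;
     nadd := fun x y n => badd Y (x n) (y n);
     nopp := fun x n => bopp Y (x n);
     nscal := fun a x n => bscal Y a (x n);
     nnorm := fun y => sup_R (fun r => exists n, r = bnorm Y (y n)) |}.

Definition is_bounded_op {s} (X Y : NSpace s) (T : ncar X -> ncar Y) : Prop :=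
  (forall x, ndom X x -> ndom Y (T x)) /\
  (forall x y, ndom X x -> ndom X y -> T (nadd X x y) = nadd Y (T x) (T y)) /\
  (forall a x, ndom X x -> T (nscal X a x) = nscal Y a (T x)) /\
  (exists C, forall x, ndom X x -> nnorm Y (T x) <= C * nnorm X x).

Definition opnorm {s} (X Y : NSpace s) (T : ncar X -> ncar Y) : R :=
  sup_R (fun r => exists x, ndom X x /\ nnorm X x <= 1 /\ r = nnorm Y (T x)).

Definition sBPBp s (X Y : NSpace s) : Prop :=
  forall eps, 0 < eps ->
  forall T : ncar X -> ncar Y, is_bounded_op X Y T -> opnorm X Y T = 1 ->
  exists eta, 0 < eta /\
    forall x0, ndom X x0 -> nnorm X x0 = 1 -> nnorm Y (T x0) > 1 - eta ->
    exists x1, ndom X x1 /\ nnorm X x1 = 1 /\ nnorm Y (T x1) = 1 /\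
               nnorm X (nadd X x1 (nopp X x0)) < eps.

Definition uniform_sBPBp s (X Y : NSpace s) : Prop :=
  forall eps, 0 < eps ->
  exists eta, 0 < eta /\
  forall T : ncar X -> ncar Y, is_bounded_op X Y T -> opnorm X Y T = 1 ->
    forall x0, ndom X x0 -> nnorm X x0 = 1 -> nnorm Y (T x0) > 1 - eta ->
    exists x1, ndom X x1 /\ nnorm X x1 = 1 /\ nnorm Y (T x1) = 1 /\
               nnorm X (nadd X x1 (nopp X x0)) < eps.

(* Main.v *)
Require Import Defs.
From Stdlib Require Import Reals Lra Lia Classical ClassicalEpsilon FunctionalExtensionality.
Open Scope R_scope.
Module P1.
Set Implicit Arguments.

Lemma sup_R_lub (E : R -> Prop) l : is_lub E l -> sup_R E = l.
Proof.
  intros Hl. unfold sup_R. destruct excluded_middle_informative as [H|H].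
  - destruct constructive_indefinite_description as [l' Hl']; simpl.
    destruct Hl as [U1 L1], Hl' as [U2 L2].
    apply Rle_antisym; [apply L2; exact U1 | apply L1; exact U2].
  - exfalso; apply H; exists l; exact Hl.
Qed.

Lemma sup_R_ne0 (E : R -> Prop) : sup_R E <> 0 -> is_lub E (sup_R E).
Proof.
  unfold sup_R. destruct excluded_middle_informative as [H|H].
  - destruct constructive_indefinite_description as [l' Hl']; simpl; auto.
  - intros C; exfalso; apply C; reflexivity.
Qed.

Lemma sup_R_bound (E : R -> Prop) b :
  (exists x, E x) -> (forall x, E x -> x <= b) -> is_lub E (sup_R E).
Proof.
  intros Hne Hb.
  destruct (completeness E) as [m Hm].
  - exists b; exact Hb.
  - exact Hne.
  - rewrite (sup_R_lub Hm); exact Hm.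
Qed.

Lemma sup_R_max (E : R -> Prop) b :
  E b -> (forall x, E x -> x <= b) -> sup_R E = b.
Proof.
  intros Hb H. apply sup_R_lub. split; [exact H|].
  intros c Hc. apply Hc; exact Hb.
Qed.

Definition Kr (s : scalars) (r : R) : Kt s :=
  match s return Kt s with RealS => r | ComplexS => mkCx r 0 end.

Lemma Kone_r s : @Kone s = Kr s 1.
Proof. destruct s; reflexivity. Qed.

Lemma Kadd_r s a b : Kadd (Kr s a) (Kr s b) = Kr s (a + b).
Proof. destruct s; simpl; [reflexivity|]. unfold Cadd; simpl; f_equal; ring. Qed.

Lemma Kabs_r s a : Kabs (Kr s a) = Rabs a.
Proof.
  destruct s; simpl; [reflexivity|]. unfold Cabs; simpl.
  replace (_ + _) with (Rsqr a) by (unfold Rsqr; ring).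
  apply sqrt_Rsqr_abs.
Qed.

Section B.
Variable s : scalars.
Variable X : Banach s.

Lemma add0l (x : X) : badd X (bzero X) x = x.
Proof. rewrite b_add_comm; apply b_add_zero. Qed.

Lemma opp_unique (a b : X) : badd X a b = bzero X -> b = bopp X a.
Proof.
  intros H.
  rewrite <- (b_add_zero X b), <- (b_add_opp X a), b_add_assoc, (b_add_comm X b a), H.
  apply add0l.
Qed.

Lemma scal_zero (x : X) : bscal X (Kr s 0) x = bzero X.
Proof.
  set (z := bscal X (Kr s 0) x).
  assert (Hz : badd X z z = z).
  { unfold z; rewrite <- b_scal_distr_r, Kadd_r; f_equal; f_equal; ring. }
  rewrite <- (b_add_opp X z). rewrite <- Hz at 2. rewrite <- b_add_assoc, b_add_opp, b_add_zero.
  reflexivity.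
Qed.

Lemma opp_scal (x : X) : bopp X x = bscal X (Kr s (-1)) x.
Proof.
  symmetry; apply opp_unique.
  rewrite <- (b_scal_one X x) at 1. rewrite Kone_r, <- b_scal_distr_r, Kadd_r.
  replace (1 + -1) with 0 by ring. apply scal_zero.
Qed.

Lemma norm_opp (x : X) : bnorm X (bopp X x) = bnorm X x.
Proof. rewrite opp_scal, b_norm_scal, Kabs_r. replace (Rabs (-1)) with 1; [ring|]. rewrite Rabs_left; lra. Qed.

Lemma norm_zero : bnorm X (bzero X) = 0.
Proof. rewrite <- (scal_zero (bzero X)), b_norm_scal, Kabs_r, Rabs_R0; ring. Qed.

Lemma norm_nonneg (x : X) : 0 <= bnorm X x.
Proof.
  pose proof (b_norm_triangle X x (bopp X x)) as H.
  rewrite b_add_opp, norm_zero, norm_opp in H. lra.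
Qed.

Lemma opp_diff (a b : X) : bopp X (badd X a (bopp X b)) = badd X b (bopp X a).
Proof.
  symmetry; apply opp_unique.
  rewrite <- b_add_assoc, (b_add_assoc X (bopp X b) b), (b_add_comm X (bopp X b) b),
    b_add_opp, add0l, b_add_opp. reflexivity.
Qed.

Lemma rev_tri (a b : X) : bnorm X b <= bnorm X a + bnorm X (badd X a (bopp X b)).
Proof.
  assert (E : b = badd X a (bopp X (badd X a (bopp X b)))).
  { rewrite opp_diff, b_add_assoc, (b_add_comm X a b), <- b_add_assoc, b_add_opp, b_add_zero.
    reflexivity. }
  rewrite E at 1. eapply Rle_trans; [apply b_norm_triangle|]. rewrite norm_opp; lra.
Qed.

End B.
End P1.
Import P1.
Module P2.

Lemma sum_nonneg (f : nat -> R) m : (forall k, 0 <= f k) -> 0 <= sum_f_R0 f m.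
Proof. intros H; induction m; simpl; [apply H|]. specialize (H (S m)); lra. Qed.

Lemma single_le (f : nat -> R) i m : (forall k, 0 <= f k) -> (i <= m)%nat -> f i <= sum_f_R0 f m.
Proof.
  intros H Hi; induction m; simpl.
  - replace i with 0%nat by lia; lra.
  - destruct (Nat.eq_dec i (S m)) as [->|Hn].
    + pose proof (sum_nonneg f m H); lra.
    + specialize (IHm ltac:(lia)). specialize (H (S m)); lra.
Qed.

Lemma two_le (f : nat -> R) i j : (forall k, 0 <= f k) -> (i < j)%nat ->
  f i + f j <= sum_f_R0 f j.
Proof.
  intros H Hij. destruct j; [lia|]. simpl.
  pose proof (@single_le f i j H ltac:(lia)); lra.
Qed.

Lemma sq_tri a b c : 0 <= a -> 0 <= b -> 0 <= c -> c <= a + b -> c ^ 2 <= 2 * a ^ 2 + 2 * b ^ 2.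
Proof.
  intros Ha Hb Hc H. assert (c * c <= (a + b) * (a + b)) by (apply Rmult_le_compat; lra).
  assert (0 <= (a - b) * (a - b)) by apply Rle_0_sqr. simpl; nra.
Qed.

Section L2.
Variable s : scalars.
Variable X : Banach s.

Definition ps (x : nat -> X) m := sum_f_R0 (fun k => bnorm X (x k) ^ 2) m.
Definition PS (x : nat -> X) := fun r => exists n, r = ps x n.
Definition dom2 (x : nat -> X) := exists M, forall n, ps x n <= M.

Lemma sq_nonneg (x : nat -> X) : forall k, 0 <= bnorm X (x k) ^ 2.
Proof. intros k; pose proof (norm_nonneg X (x k)); nra. Qed.

Lemma PS_lub x : dom2 x -> is_lub (PS x) (sup_R (PS x)).
Proof.
  intros [M HM]. apply sup_R_bound with M.
  - exists (ps x 0); exists 0%nat; reflexivity.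
  - intros r [n ->]; apply HM.
Qed.

Lemma ps_le_sup x n : dom2 x -> ps x n <= sup_R (PS x).
Proof. intros H; apply (PS_lub x H); exists n; reflexivity. Qed.

Lemma sup_nonneg x : dom2 x -> 0 <= sup_R (PS x).
Proof.
  intros H; eapply Rle_trans; [|apply (ps_le_sup x 0 H)].
  unfold ps; apply sum_nonneg, sq_nonneg.
Qed.

Lemma coord_le x k : dom2 x -> bnorm X (x k) <= sqrt (sup_R (PS x)).
Proof.
  intros H. pose proof (norm_nonneg X (x k)) as H0.
  rewrite <- (sqrt_pow2 (bnorm X (x k)) H0). apply sqrt_le_1_alt.
  eapply Rle_trans; [|apply (ps_le_sup x k H)].
  unfold ps. apply (@single_le (fun k => bnorm X (x k) ^ 2) k k (sq_nonneg x)); lia.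
Qed.

Lemma norm1_ps x n : dom2 x -> sqrt (sup_R (PS x)) = 1 -> ps x n <= 1.
Proof.
  intros H H1. pose proof (sup_nonneg x H).
  assert (sup_R (PS x) = 1).
  { rewrite <- (sqrt_sqrt (sup_R (PS x))) by lra. rewrite H1; ring. }
  rewrite <- H2; apply ps_le_sup; exact H.
Qed.

Lemma dom2_add x y : dom2 x -> dom2 y -> dom2 (fun n => badd X (x n) (y n)).
Proof.
  intros [Mx Hx] [My Hy]. exists (2 * Mx + 2 * My). intros n.
  assert (ps (fun n => badd X (x n) (y n)) n <= 2 * ps x n + 2 * ps y n).
  { unfold ps. induction n; cbn [sum_f_R0].
    - apply sq_tri; [apply norm_nonneg|apply norm_nonneg|apply norm_nonneg|apply b_norm_triangle].
    - pose proof (sq_tri _ _ _ (norm_nonneg X (x (S n))) (norm_nonneg X (y (S n)))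
        (norm_nonneg X (badd X (x (S n)) (y (S n)))) (b_norm_triangle X (x (S n)) (y (S n)))).
      cbv beta. lra. }
  specialize (Hx n); specialize (Hy n); lra.
Qed.

Lemma dom2_opp x : dom2 x -> dom2 (fun n => bopp X (x n)).
Proof.
  intros [M HM]; exists M; intros n.
  unfold ps in *. rewrite (sum_eq _ (fun k => bnorm X (x k) ^ 2)); [apply HM|].
  intros i _; rewrite norm_opp; reflexivity.
Qed.

Definition en (v : X) (n : nat) : nat -> X :=
  fun k => if Nat.eq_dec k n then v else bzero X.

Lemma ps_en v n m : bnorm X v = 1 ->
  ps (en v n) m = if Compare_dec.le_dec n m then 1 else 0.
Proof.
  intros Hv. unfold ps, en. induction m; cbn [sum_f_R0].
  - destruct (Compare_dec.le_dec n 0); destruct (Nat.eq_dec 0 n); try lia.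
    + rewrite Hv; ring.
    + rewrite norm_zero; ring.
  - rewrite IHm. destruct (Nat.eq_dec (S m) n);
      destruct (Compare_dec.le_dec n (S m)); destruct (Compare_dec.le_dec n m);
      try lia; rewrite ?Hv, ?norm_zero; ring.
Qed.

Lemma en_dom v n : bnorm X v = 1 -> dom2 (en v n).
Proof.
  intros Hv; exists 1; intros m; rewrite ps_en by exact Hv.
  destruct Compare_dec.le_dec; lra.
Qed.

Lemma en_norm v n : bnorm X v = 1 -> sqrt (sup_R (PS (en v n))) = 1.
Proof.
  intros Hv. rewrite (@sup_R_max (PS (en v n)) 1).
  - apply sqrt_1.
  - exists n; rewrite ps_en by exact Hv; destruct Compare_dec.le_dec; [reflexivity|lia].
  - intros r [m ->]; rewrite ps_en by exact Hv; destruct Compare_dec.le_dec; lra.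
Qed.

End L2.
Arguments ps {s} X x m.
Arguments PS {s} X x _.
Arguments dom2 {s} X x.
Arguments sq_nonneg {s} X x k.
Arguments PS_lub {s} X x _.
Arguments ps_le_sup {s} X x n _.
Arguments sup_nonneg {s} X x _.
Arguments coord_le {s} X x k _.
Arguments norm1_ps {s} X x n _ _.
Arguments dom2_add {s} X x y _ _.
Arguments dom2_opp {s} X x _.
Arguments en {s} X v n _.
Arguments ps_en {s} X v n m _.
Arguments en_dom {s} X v n _.
Arguments en_norm {s} X v n _.
End P2.
Import P2.
Module P3.

Section Op.
Variable s : scalars.
Variables X Y : Banach s.

Lemma op_zero (T : X -> Y) : is_bounded_op (NofB X) (NofB Y) T -> T (bzero X) = bzero Y.
Proof.
  intros [_ [_ [Hs _]]].
  pose proof (Hs (Kr s 0) (bzero X) I) as E; simpl in E.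
  rewrite scal_zero, scal_zero in E. exact E.
Qed.

Lemma op_le (T : X -> Y) : is_bounded_op (NofB X) (NofB Y) T ->
  opnorm (NofB X) (NofB Y) T = 1 -> forall x, bnorm Y (T x) <= bnorm X x.
Proof.
  intros HB Ho x.
  assert (Hl : is_lub (fun r => exists x, ndom (NofB X) x /\ nnorm (NofB X) x <= 1 /\
                        r = nnorm (NofB Y) (T x)) 1).
  { unfold opnorm in Ho. pose proof (sup_R_ne0 _ ltac:(rewrite Ho; lra)) as L. rewrite Ho in L. exact L. }
  destruct (Req_dec (bnorm X x) 0) as [H0|H0].
  - apply b_norm_eq0 in H0. subst x. rewrite (op_zero T HB), !norm_zero; lra.
  - pose proof (norm_nonneg X x) as Hn.
    set (r := bnorm X x) in *.
    assert (Hr : 0 < r) by lra.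
    set (y := bscal X (Kr s (/ r)) x).
    assert (Hy : bnorm X y = 1).
    { unfold y; rewrite b_norm_scal, Kabs_r, Rabs_right.
      - fold r; field; lra.
      - apply Rle_ge, Rlt_le, Rinv_0_lt_compat; lra. }
    assert (HTy : bnorm Y (T y) <= 1).
    { apply (proj1 Hl). exists y; simpl; repeat split; lra. }
    destruct HB as [_ [_ [Hs _]]].
    pose proof (Hs (Kr s (/ r)) x I) as E; simpl in E. fold y in E.
    rewrite E, b_norm_scal, Kabs_r, Rabs_right in HTy.
    + apply Rmult_le_reg_l with (/ r); [apply Rinv_0_lt_compat; lra|].
      replace (/ r * r) with 1 by (field; lra). exact HTy.
    + apply Rle_ge, Rlt_le, Rinv_0_lt_compat; lra.
Qed.
End Op.

Definition NS {s} (Y : Banach s) (y : nat -> Y) := fun r => exists n, r = bnorm Y (y n).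

Lemma NS_lub s (Y : Banach s) (y : nat -> Y) M : (forall n, bnorm Y (y n) <= M) ->
  is_lub (NS Y y) (sup_R (NS Y y)).
Proof.
  intros H. apply sup_R_bound with M.
  - exists (bnorm Y (y 0%nat)); exists 0%nat; reflexivity.
  - intros r [n ->]; apply H.
Qed.
End P3.
Import P3.

Section Main.
Variable s : scalars.
Variables X Y : Banach s.
Variable Tn : nat -> X -> Y.
Hypothesis HB : forall k, is_bounded_op (NofB X) (NofB Y) (Tn k).
Hypothesis Ho : forall k, opnorm (NofB X) (NofB Y) (Tn k) = 1.

Lemma TT_bound z : dom2 X z -> forall k, bnorm Y (Tn k (z k)) <= sqrt (sup_R (PS X z)).
Proof.
  intros Hz k. eapply Rle_trans; [apply op_le; [apply HB|apply Ho]|]. apply coord_le; exact Hz.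
Qed.

Lemma TT_norm_le z : dom2 X z -> sup_R (NS Y (fun k => Tn k (z k))) <= sqrt (sup_R (PS X z)).
Proof.
  intros Hz. pose proof (NS_lub _ Y (fun k => Tn k (z k)) _ (TT_bound z Hz)) as [_ L].
  apply L. intros r [n ->]. apply TT_bound; exact Hz.
Qed.

Lemma TT_op : is_bounded_op (l2 X) (linf Y) (fun z k => Tn k (z k)).
Proof.
  split; [|split; [|split]].
  - intros z Hz. exists (sqrt (sup_R (PS X z))). exact (TT_bound z Hz).
  - intros x y Hx Hy. simpl. apply functional_extensionality; intros k.
    destruct (HB k) as [_ [Ha _]]. exact (Ha _ _ I I).
  - intros a x Hx. simpl. apply functional_extensionality; intros k.
    destruct (HB k) as [_ [_ [Hs _]]]. exact (Hs _ _ I).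
  - exists 1; intros z Hz. rewrite Rmult_1_l. exact (TT_norm_le z Hz).
Qed.

Lemma TT_en v n : sup_R (NS Y (fun k => Tn k (en X v n k))) = bnorm Y (Tn n v).
Proof.
  apply sup_R_max.
  - exists n; unfold en; destruct Nat.eq_dec; [reflexivity|contradiction].
  - intros r [k ->]; unfold en; destruct Nat.eq_dec.
    + subst; lra.
    + rewrite (op_zero _ _ _ _ (HB k)), norm_zero; apply norm_nonneg.
Qed.

End Main.

Theorem mainTheorem17 (s : scalars) (X Y : Banach s) :
  ~ uniform_sBPBp (NofB X) (NofB Y) ->
  ~ sBPBp (l2 X) (linf Y).
Proof.
  intros Hnu Hs. apply Hnu; intros eps Heps. apply NNPP; intros Hno.
  assert (Hex : forall n : nat, exists p : (X -> Y) * X,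
    is_bounded_op (NofB X) (NofB Y) (fst p) /\ opnorm (NofB X) (NofB Y) (fst p) = 1 /\
    bnorm X (snd p) = 1 /\ bnorm Y (fst p (snd p)) > 1 - / INR (S n) /\
    forall x1, bnorm X x1 = 1 -> bnorm Y (fst p x1) = 1 ->
      eps <= bnorm X (badd X x1 (bopp X (snd p)))).
  { intros n. apply NNPP; intros H. apply Hno. exists (/ INR (S n)). split.
    { apply Rinv_0_lt_compat, lt_0_INR; lia. }
    intros T HT HoT x0 _ Hx0 HTx0. apply NNPP; intros Hx1. apply H.
    exists (T, x0); simpl; split; [exact HT|split; [exact HoT|split; [exact Hx0|split; [exact HTx0|]]]].
    intros x1 H1 H2. apply Rnot_lt_le; intros Hlt. apply Hx1.
    exists x1; repeat split; try exact I; assumption. }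
  destruct (choice _ Hex) as [f Hf].
  set (Tn := fun k => fst (f k)). set (xs := fun k => snd (f k)).
  assert (HB : forall k, is_bounded_op (NofB X) (NofB Y) (Tn k)) by (intros k; apply (Hf k)).
  assert (Ho : forall k, opnorm (NofB X) (NofB Y) (Tn k) = 1) by (intros k; apply (Hf k)).
  assert (Hxs : forall k, bnorm X (xs k) = 1) by (intros k; apply (Hf k)).
  assert (HTx : forall k, bnorm Y (Tn k (xs k)) > 1 - / INR (S k)) by (intros k; apply (Hf k)).
  assert (Hfar : forall k x1, bnorm X x1 = 1 -> bnorm Y (Tn k x1) = 1 ->
      eps <= bnorm X (badd X x1 (bopp X (xs k)))) by (intros k; apply (Hf k)).
  clearbody Tn xs. clear f Hf Hex Hno.
  set (TT := (fun z k => Tn k (z k)) : ncar (l2 X) -> ncar (linf Y)).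
  assert (HTT : is_bounded_op (l2 X) (linf Y) TT) by exact (TT_op _ _ _ Tn HB Ho).
  assert (Hop : opnorm (l2 X) (linf Y) TT = 1).
  { apply sup_R_lub; split.
    - intros r [z [Hz [Hz1 ->]]]. eapply Rle_trans; [apply (TT_norm_le _ _ _ Tn HB Ho z Hz)|exact Hz1].
    - intros b Hb. apply Rnot_lt_le; intros Hlt.
      destruct (archimed_cor1 (1 - b)) as [N [HN HN0]]; [lra|].
      assert (HSN : S (pred N) = N) by lia.
      assert (Hel : bnorm Y (Tn (pred N) (xs (pred N))) <= b).
      { rewrite <- (TT_en _ _ _ Tn HB (xs (pred N)) (pred N)). apply Hb.
        exists (en X (xs (pred N)) (pred N)). split; [|split].
        - exact (en_dom X _ _ (Hxs _)).
        - change (sqrt (sup_R (PS X (en X (xs (pred N)) (pred N)))) <= 1). pose proof (en_norm X _ (pred N) (Hxs (pred N))) as E.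
          rewrite E; lra.
        - reflexivity. }
      pose proof (HTx (pred N)) as H1. rewrite HSN in H1. lra. }
  assert (Heps' : 0 < Rmin eps (1/4)) by (apply Rmin_pos; lra).
  destruct (Hs _ Heps' TT HTT Hop) as [eta [Heta Hx]].
  destruct (archimed_cor1 eta Heta) as [N [HN HN0]].
  set (n := pred N). assert (HSN : S n = N) by (unfold n; lia).
  set (x0 := en X (xs n) n).
  assert (Hd0 : dom2 X x0) by exact (en_dom X _ _ (Hxs _)).
  destruct (Hx x0 Hd0) as [x1 [Hd1 [Hn1 [HT1 Hdist]]]].
  { exact (en_norm X _ n (Hxs n)). }
  { change (sup_R (NS Y (fun k => Tn k (x0 k))) > 1 - eta).
    unfold x0; rewrite (TT_en _ _ _ Tn HB). pose proof (HTx n) as H1. rewrite HSN in H1. lra. }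
  change (dom2 X x1) in Hd1.
  change (sqrt (sup_R (PS X x1)) = 1) in Hn1.
  change (sup_R (NS Y (fun k => Tn k (x1 k))) = 1) in HT1.
  change (sqrt (sup_R (PS X (fun k => badd X (x1 k) (bopp X (x0 k))))) < Rmin eps (1/4)) in Hdist.
  assert (Hdd : dom2 X (fun k => badd X (x1 k) (bopp X (x0 k))))
    by exact (dom2_add X x1 _ Hd1 (dom2_opp X x0 Hd0)).
  assert (Hx0n : x0 n = xs n) by (unfold x0, en; destruct Nat.eq_dec; [reflexivity|contradiction]).
  pose proof (coord_le X _ n Hdd) as Hc. simpl in Hc. rewrite Hx0n in Hc.
  set (d := bnorm X (badd X (x1 n) (bopp X (xs n)))) in *.
  set (a := bnorm X (x1 n)).
  pose proof (rev_tri X (x1 n) (xs n)) as Hrt. fold a d in Hrt. rewrite Hxs in Hrt.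
  pose proof (Rmin_l eps (1/4)); pose proof (Rmin_r eps (1/4)).
  assert (Ha1 : a <= 1) by (unfold a; rewrite <- Hn1; apply coord_le; exact Hd1).
  assert (Hk : forall k, k <> n -> bnorm Y (Tn k (x1 k)) <= 7/10).
  { intros k Hkn. eapply Rle_trans; [apply op_le; [apply HB|apply Ho]|].
    assert (Hsq : bnorm X (x1 k) ^ 2 + a ^ 2 <= 1).
    { destruct (Nat.lt_ge_cases k n) as [Hlt|Hge].
      - pose proof (@two_le (fun k => bnorm X (x1 k) ^ 2) k n (sq_nonneg X x1) Hlt) as P1.
        pose proof (norm1_ps X x1 n Hd1 Hn1) as P2. unfold ps in P2. cbv beta in P1. fold a in P1. lra.
      - assert (Hlt : (n < k)%nat) by lia.
        pose proof (@two_le (fun k => bnorm X (x1 k) ^ 2) n k (sq_nonneg X x1) Hlt) as P1.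
        pose proof (norm1_ps X x1 k Hd1 Hn1) as P2. unfold ps in P2. cbv beta in P1. fold a in P1. lra. }
    pose proof (norm_nonneg X (x1 k)). nra. }
  assert (HTn : 1 <= bnorm Y (Tn n (x1 n))).
  { assert (Hbd : forall k, bnorm Y (Tn k (x1 k)) <= 1).
    { intros k; rewrite <- Hn1; apply TT_bound; assumption. }
    pose proof (NS_lub _ Y _ _ Hbd) as [_ L]. rewrite HT1 in L.
    destruct (Rle_lt_dec 1 (bnorm Y (Tn n (x1 n)))) as [?|Hl]; [assumption|].
    exfalso. assert (1 <= Rmax (7/10) (bnorm Y (Tn n (x1 n)))).
    { apply L. intros r [k ->]. destruct (Nat.eq_dec k n) as [->|Hkn].
      - apply Rmax_r.
      - eapply Rle_trans; [apply Hk; exact Hkn|apply Rmax_l]. }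
    unfold Rmax in H1; destruct Rle_dec in H1; lra. }
  pose proof (op_le _ _ _ _ (HB n) (Ho n) (x1 n)) as Hle. fold a in Hle.
  assert (Hfa : eps <= d).
  { apply Hfar; fold a; lra. }
  lra.
Qed.
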